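(* Let $G=(V,E)$ be a connected graph, $\tau$ a set of types, $f:\tau\to\mathbb{Q}_{\ge1}$ a fitness function, and $\alpha\in\tau$. Let $\beta=\arg\max\{f(j): j\in\tau\setminus\{\alpha\}\}$ and $\tau'=\{\alpha,\beta\}$. Let $\Omega$ (resp. $\Omega'$) be the set of functions $V\to\tau$ (resp. $V\to\tau'$), and define $g:\Omega\to\Omega'$ by $g(S)(v)=\alpha$ if $S(v)=\alpha$ and $g(S)(v)=\beta$ otherwise. Then for every $M_0\in\Omega$, $\pi_\alpha(G,\tau,f,M_0)\ge\pi_\alpha(G,\tau',f,g(M_0))$ (where on the right $f$ is restricted to $\tau'$).
   Context: For $G=(V,E)$, $N(v)$ is the neighbourhood of $v$. For a state $S:V\to\tau$ and $v,w\in V$, $S|_{v\to w}$ equals $S$ except $w$ gets type $S(v)$. The Moran process $M(G,\tau,f,M_0)$ is the Markov chain on states $V\to\tau$ started at $M_0$ in which, given $M_t$, a vertex $v$ is chosen with probability $f(M_t(v))/\sum_{u\in V}f(M_t(u))$, then $w\in N(v)$ uniformly at random, and $M_{t+1}=M_t|_{v\to w}$. $\pi_j(G,\tau,f,M_0)$ is the probability that at some time every vertex has type $j$. *)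

(* Defs.v *)
From HB Require Import structures.
From mathcomp Require Import all_boot all_order all_algebra.
From mathcomp Require Import classical_sets reals.
Set Implicit Arguments. Unset Strict Implicit. Unset Printing Implicit Defensive.
Import Order.TTheory GRing.Theory Num.Theory.
Local Open Scope ring_scope.

Definition connected_graph (V : finType) (e : rel V) : Prop :=
  symmetric e /\ irreflexive e /\ (forall u v : V, connect e u v).

Definition nbhd (V : finType) (e : rel V) (v : V) : {set V} := [set w | e v w].

Definition upd (V τ : finType) (S : {ffun V -> τ}) (v w : V) : {ffun V -> τ} :=
  [ffun u => if u == w then S v else S u].

Definition mono (V τ : finType) (S : {ffun V -> τ}) (j : τ) : bool :=
  [forall u, S u == j].

Definition total_fit (R : realType) (V τ : finType) (f : τ -> rat)
  (S : {ffun V -> τ}) : R := \sum_(u : V) ratr (f (S u)).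

(* hit R e f j t S = probability that the Moran process M(G,τ,f,S)
   has, at some time s <= t, every vertex of type j. *)
Fixpoint hit (R : realType) (V τ : finType) (e : rel V) (f : τ -> rat)
  (j : τ) (t : nat) (S : {ffun V -> τ}) : R :=
  if mono S j then 1 else
  match t with
  | 0 => 0
  | t'.+1 =>
      \sum_(v : V) (ratr (f (S v)) / total_fit R f S) *
        \sum_(w in nbhd e v) (#|nbhd e v|%:R)^-1 * hit R e f j t' (upd S v w)
  end.

(* pi_j(G,τ,f,M0): probability that at some time every vertex has type j
   (the increasing limit, i.e. supremum, of the hitting-by-time-t probabilities). *)
Definition fixprob (R : realType) (V τ : finType) (e : rel V) (f : τ -> rat)
  (j : τ) (M0 : {ffun V -> τ}) : R :=
  sup (range (fun t : nat => hit R e f j t M0)).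

Definition pair_type (τ : finType) (a b : τ) : finType :=
  {x : τ | (x == a) || (x == b)}.

Lemma pair_a_proof (τ : finType) (a b : τ) : (a == a) || (a == b).
Proof. by rewrite eqxx. Qed.
Lemma pair_b_proof (τ : finType) (a b : τ) : (b == a) || (b == b).
Proof. by rewrite eqxx orbT. Qed.

Definition pair_a (τ : finType) (a b : τ) : pair_type a b :=
  exist _ a (pair_a_proof a b).
Definition pair_b (τ : finType) (a b : τ) : pair_type a b :=
  exist _ b (pair_b_proof a b).

Definition restr_fit (τ : finType) (a b : τ) (f : τ -> rat) : pair_type a b -> rat :=
  fun x => f (val x).

Definition gproj (V τ : finType) (a b : τ) (S : {ffun V -> τ}) :
  {ffun V -> pair_type a b} :=
  [ffun v => if S v == a then pair_a a b else pair_b a b].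

(* Main.v *)
Require Import Defs.
From HB Require Import structures.
From mathcomp Require Import all_boot all_order all_algebra.
From mathcomp Require Import classical_sets reals.
From mathcomp Require Import lra.
Set Implicit Arguments. Unset Strict Implicit. Unset Printing Implicit Defensive.
Import Order.TTheory GRing.Theory Num.Theory.
Local Open Scope ring_scope.

Section Gen.
Variables (R : realType) (V τ : finType) (e : rel V) (f : τ -> rat) (j : τ).
Hypothesis f_ge0 : forall x, 0 <= f x.

Lemma sumN_le1 (v : V) (c : V -> R) : (forall w, 0 <= c w <= 1) ->
  \sum_(w in nbhd e v) (#|nbhd e v|%:R)^-1 * c w <= 1.
Proof.
move=> cb.
apply: (@le_trans _ _ (\sum_(w in nbhd e v) (#|nbhd e v|%:R : R)^-1)).
  apply: ler_sum => w _; rewrite -[X in _ <= X]mulr1; apply: ler_wpM2l.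
    by rewrite invr_ge0.
  by case/andP: (cb w).
rewrite sumr_const -(mulr_natr ((#|nbhd e v|%:R : R)^-1)).
have [->|n0] := eqVneq #|nbhd e v| 0%N; first by rewrite ?mulr0n ?invr0 ?mul0r ?mulr0 ?ler01.
by rewrite mulVf // pnatr_eq0.
Qed.

Lemma sumN_eq1 (v : V) : nbhd e v != @finset.set0 V ->
  \sum_(w in nbhd e v) (#|nbhd e v|%:R : R)^-1 = 1.
Proof.
move=> ne; rewrite sumr_const -(mulr_natr ((#|nbhd e v|%:R : R)^-1)) mulVf // pnatr_eq0.
by rewrite cards_eq0.
Qed.

Lemma fit_ge0 (S : {ffun V -> τ}) v : 0 <= (ratr (f (S v)) : R).
Proof. by rewrite ler0q. Qed.

Lemma tot_ge0 (S : {ffun V -> τ}) : 0 <= total_fit R f S.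
Proof. by apply: sumr_ge0 => v _; apply: fit_ge0. Qed.

Lemma coef_ge0 (S : {ffun V -> τ}) v : 0 <= ratr (f (S v)) / total_fit R f S.
Proof. by rewrite divr_ge0 ?fit_ge0 ?tot_ge0. Qed.

Lemma sum_coef_le1 (S : {ffun V -> τ}) :
  \sum_v (ratr (f (S v)) / total_fit R f S) <= 1.
Proof.
rewrite -mulr_suml -/(total_fit R f S).
have [->|n0] := eqVneq (total_fit R f S) 0; first by rewrite invr0 mulr0.
by rewrite divff.
Qed.

Lemma step_le1 (S : {ffun V -> τ}) (h : {ffun V -> τ} -> R) :
  (forall S', 0 <= h S' <= 1) ->
  \sum_v (ratr (f (S v)) / total_fit R f S) *
    \sum_(w in nbhd e v) (#|nbhd e v|%:R)^-1 * h (upd S v w) <= 1.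
Proof.
move=> hb; apply: le_trans (sum_coef_le1 S).
apply: ler_sum => v _; rewrite -[X in _ <= X]mulr1; apply: ler_wpM2l.
  exact: coef_ge0.
by apply: sumN_le1 => w; apply: hb.
Qed.

Lemma step_ge0 (S : {ffun V -> τ}) (h : {ffun V -> τ} -> R) :
  (forall S', 0 <= h S') ->
  0 <= \sum_v (ratr (f (S v)) / total_fit R f S) *
    \sum_(w in nbhd e v) (#|nbhd e v|%:R)^-1 * h (upd S v w).
Proof.
move=> hb; apply: sumr_ge0 => v _; apply: mulr_ge0; first exact: coef_ge0.
apply: sumr_ge0 => w _; apply: mulr_ge0 => //; by rewrite invr_ge0.
Qed.

Lemma step_mono (S : {ffun V -> τ}) (h1 h2 : {ffun V -> τ} -> R) :
  (forall S', h1 S' <= h2 S') ->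
  \sum_v (ratr (f (S v)) / total_fit R f S) *
    \sum_(w in nbhd e v) (#|nbhd e v|%:R)^-1 * h1 (upd S v w) <=
  \sum_v (ratr (f (S v)) / total_fit R f S) *
    \sum_(w in nbhd e v) (#|nbhd e v|%:R)^-1 * h2 (upd S v w).
Proof.
move=> hb; apply: ler_sum => v _; apply: ler_wpM2l; first exact: coef_ge0.
apply: ler_sum => w _; apply: ler_wpM2l => //; by rewrite invr_ge0.
Qed.

Lemma hit_bnd t S : 0 <= hit R e f j t S <= 1.
Proof.
elim: t S => [|t IH] S /=; case: ifP => _ //; rewrite ?lexx ?ler01 //.
apply/andP; split; first by apply: (@step_ge0 _ (hit R e f j t)) => S'; case/andP: (IH S').
exact: (@step_le1 _ (hit R e f j t)).
Qed.

Lemma hit_S t S : hit R e f j t S <= hit R e f j t.+1 S.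
Proof.
elim: t S => [|t IH] S /=; case: ifP => _ //.
  by apply: (@step_ge0 _ (hit R e f j 0)) => S'; case/andP: (hit_bnd 0 S').
by apply: (@step_mono _ (hit R e f j t) (hit R e f j t.+1)) => S'; apply: IH.
Qed.

Lemma hit_le t t' S : (t <= t')%N -> hit R e f j t S <= hit R e f j t' S.
Proof.
move/subnK => <-; elim: (t' - t)%N => [|k IH] //.
by apply: le_trans IH _; rewrite addSn; apply: hit_S.
Qed.

Let U S := fixprob R e f j S.

Lemma hasU S : has_sup (range (fun t => hit R e f j t S)).
Proof.
split; first by exists (hit R e f j 0 S), 0%N.
by exists 1 => _ [t _ <-]; case/andP: (hit_bnd t S).
Qed.

Lemma U_ge t S : hit R e f j t S <= U S.
Proof. by rewrite /U /fixprob; apply: (sup_upper_bound (hasU S)); exists t. Qed.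

Lemma U_bnd S : 0 <= U S <= 1.
Proof.
apply/andP; split; first by apply: le_trans (U_ge 0 S); case/andP: (hit_bnd 0 S).
apply: ge_sup; first by exists (hit R e f j 0 S), 0%N.
by move=> _ [t _ <-]; case/andP: (hit_bnd t S).
Qed.

Lemma U_mono S : mono S j -> U S = 1.
Proof.
move=> m; apply/eqP; rewrite eq_le; case/andP: (U_bnd S) => _ ->.
by have := U_ge 0 S; rewrite /= m.
Qed.

Lemma U_approx (eps : R) : 0 < eps ->
  exists t, forall S, U S - eps <= hit R e f j t S.
Proof.
move=> ep.
suff: forall s : seq {ffun V -> τ}, exists t, forall S, S \in s -> U S - eps <= hit R e f j t S.
  by case/(_ (enum {ffun V -> τ})) => t Ht; exists t => S; apply: Ht; rewrite mem_enum.
elim=> [|S0 s [t Ht]]; first by exists 0%N.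
have [_ [t0 _ <-] lt0] := sup_adherent ep (hasU S0).
exists (maxn t t0) => S; rewrite inE => /orP [/eqP ->|Hs].
  apply: le_trans (ltW lt0) _; apply: hit_le; exact: leq_maxr.
apply: le_trans (Ht S Hs) _; apply: hit_le; exact: leq_maxl.
Qed.

Lemma U_super (S : {ffun V -> τ}) :
  \sum_v (ratr (f (S v)) / total_fit R f S) *
    \sum_(w in nbhd e v) (#|nbhd e v|%:R)^-1 * U (upd S v w) <= U S.
Proof.
case m: (mono S j).
  by rewrite U_mono //; apply: (@step_le1 _ U) => S'; apply: U_bnd.
apply/ler_addgt0Pr => eps ep.
have [t Ht] := U_approx ep.
apply: (@le_trans _ _ (hit R e f j t.+1 S + eps)); last by rewrite lerD2r U_ge.
rewrite /= m.
apply: (@le_trans _ _ (\sum_v (ratr (f (S v)) / total_fit R f S) *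
    \sum_(w in nbhd e v) (#|nbhd e v|%:R)^-1 * (hit R e f j t (upd S v w) + eps))).
  by apply: (@step_mono _ _ (fun S' => hit R e f j t S' + eps)) => S'; rewrite -lerBlDr.
have -> : \sum_v (ratr (f (S v)) / total_fit R f S) *
    \sum_(w in nbhd e v) (#|nbhd e v|%:R)^-1 * (hit R e f j t (upd S v w) + eps) =
  \sum_v (ratr (f (S v)) / total_fit R f S) *
    \sum_(w in nbhd e v) (#|nbhd e v|%:R)^-1 * hit R e f j t (upd S v w) +
  \sum_v (ratr (f (S v)) / total_fit R f S) *
    \sum_(w in nbhd e v) (#|nbhd e v|%:R)^-1 * (fun _ => eps) (upd S v w).
  rewrite -big_split /=; apply: eq_bigr => v _; rewrite -mulrDr -big_split /=.
  by congr (_ * _); apply: eq_bigr => w _; rewrite mulrDr.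
rewrite lerD2l.
have H := @step_le1 S (fun _ => 1) (fun _ => introT andP (conj (@ler01 R) (lexx (1:R)))).
rewrite -[X in _ <= X]mul1r.
apply: le_trans (_ : _ <= (\sum_v (ratr (f (S v)) / total_fit R f S) *
    \sum_(w in nbhd e v) (#|nbhd e v|%:R)^-1 * (fun _ => 1) (upd S v w)) * eps) _.
  rewrite mulr_suml; apply: ler_sum => v _.
  rewrite -(mulrA (ratr (f (S v)) / _)) mulr_suml; apply: ler_wpM2l; first exact: coef_ge0.
  by apply: ler_sum => w _; rewrite mulr1.
by apply: ler_wpM2r => //; apply: ltW.
Qed.

End Gen.
Section Main.
Variables (R : realType) (V : finType) (e : rel V) (τ : finType) (f : τ -> rat) (α β : τ).
Hypotheses (conn : connected_graph e) (f1 : forall j, 1 <= f j) (nab : β != α)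
  (fmax : forall j, j != α -> f j <= f β).

Let f0 : forall j, 0 <= f j.
Proof. by move=> j; apply: le_trans (f1 j). Qed.
Let fr0 : forall x : pair_type α β, 0 <= restr_fit f x.
Proof. by move=> x; apply: f0. Qed.

Let U (S : {ffun V -> τ}) : R := fixprob R e f α S.
Let T' := pair_type α β.

Definition compat (T : {ffun V -> T'}) (S : {ffun V -> τ}) : bool :=
  [forall v, (val (T v) == α) ==> (S v == α)].

Lemma compatP (T : {ffun V -> T'}) (S : {ffun V -> τ}) : reflect (forall v, val (T v) = α -> S v = α) (compat T S).
Proof.
apply: (iffP forallP) => H v.
  by move=> /eqP h; apply/eqP; move: (H v); rewrite h.
by apply/implyP => /eqP /H ->.
Qed.

Let S0 : {ffun V -> τ} := [ffun _ => α].
Let cS0 (T : {ffun V -> T'}) : compat T S0.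
Proof. by apply/compatP => v _; rewrite ffunE. Qed.

Definition Smin (T : {ffun V -> T'}) := [arg min_(S < S0 | compat T S) U S]%O.

Lemma Smin_spec (T : {ffun V -> T'}) : compat T (Smin T) /\ forall S, compat T S -> U (Smin T) <= U S.
Proof.
rewrite /Smin; case: (arg_minP U (cS0 T)) => S cS minS; split => //.
Qed.

Let Phi (T : {ffun V -> T'}) := U (Smin T).

Lemma compat_upd (T : {ffun V -> T'}) (S : {ffun V -> τ}) v w : compat T S -> compat (upd T v w) (upd S v w).
Proof.
move/compatP => c; apply/compatP => u; rewrite !ffunE.
by case: (u == w); apply: c.
Qed.

Lemma compat_updT (T : {ffun V -> T'}) (S : {ffun V -> τ}) v w : val (T v) != α -> compat T S -> compat (upd T v w) S.
Proof.
move=> Tv /compatP c; apply/compatP => u; rewrite !ffunE.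
case: (u == w); last by apply: c.
by move=> h; rewrite h eqxx in Tv.
Qed.

Lemma compat_updS (T : {ffun V -> T'}) (S : {ffun V -> τ}) v w : S v = α -> compat T S -> compat T (upd S v w).
Proof.
move=> Sv /compatP c; apply/compatP => u; rewrite !ffunE.
by case: (u == w) => // h; apply: c.
Qed.

Lemma nbhd_empty v0 : nbhd e v0 = finset.set0 -> forall u, u = v0.
Proof.
move=> N0 u; case: conn => _ [_ /(_ v0 u) /connectP [p pth ->]].
case: p pth => [//|z p] /= /andP [ez _].
have : z \in nbhd e v0 by rewrite inE.
by rewrite N0 inE.
Qed.

Lemma U_ge0 S : 0 <= U S.
Proof. by case/andP: (U_bnd R e α f0 S). Qed.

Lemma tot_gt0 (τ0 : finType) (g : τ0 -> rat) (S : {ffun V -> τ0}) (v0 : V) :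
  (forall x, 1 <= g x) -> 0 < total_fit R g S.
Proof.
move=> g1; rewrite /total_fit (bigD1 v0) //=.
apply: (@lt_le_trans _ _ (ratr (g (S v0)))).
  by rewrite ltr0q; apply: lt_le_trans (g1 _).
rewrite lerDl; apply: sumr_ge0 => v _; rewrite ler0q.
by apply: le_trans (g1 _).
Qed.

Lemma Phi_super (T : {ffun V -> T'}) :
  \sum_v (ratr (restr_fit f (T v)) / total_fit R (restr_fit f) T) *
    \sum_(w in nbhd e v) (#|nbhd e v|%:R)^-1 * Phi (upd T v w) <= Phi T.
Proof.
have [cS minS] := Smin_spec T.
rewrite /Phi; set S := Smin T; set u := U S.
have u0 : 0 <= u by apply: U_ge0.
case: (pickP (@predT V)) => [v0 _ | none]; last first.
  by rewrite big_pred0.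
case: (boolP [exists v, nbhd e v == finset.set0]) => [/existsP [v1 /eqP N0] | /existsPn Nne].
  rewrite big1 // => v _.
  by rewrite (nbhd_empty N0 v) N0 big_set0 mulr0.
set F' := total_fit R (restr_fit f) T.
set F := total_fit R f S.
have F'0 : 0 < F' by apply: tot_gt0 v0 _ => x; apply: f1.
have F0 : 0 < F by apply: tot_gt0 v0 _.
have hS := U_super R e α f0 S.
set cS_ := fun v => \sum_(w in nbhd e v) (#|nbhd e v|%:R)^-1 * U (upd S v w).
set cT_ := fun v => \sum_(w in nbhd e v) (#|nbhd e v|%:R)^-1 * U (Smin (upd T v w)).
have -> : \sum_v (ratr (restr_fit f (T v)) / F') * cT_ v =
   (\sum_v ratr (restr_fit f (T v)) * cT_ v) / F'.
  by rewrite mulr_suml; apply: eq_bigr => v _; rewrite mulrAC.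
have hS' : \sum_v ratr (f (S v)) * cS_ v <= u * F.
  rewrite -ler_pdivrMr // mulr_suml; apply: le_trans hS.
  by rewrite le_eqVlt; apply/orP; left; apply/eqP; apply: eq_bigr => v _; rewrite mulrAC.
rewrite ler_pdivrMr //.
have key : forall v, ratr (restr_fit f (T v)) * cT_ v - ratr (restr_fit f (T v)) * u
   <= ratr (f (S v)) * cS_ v - ratr (f (S v)) * u.
  move=> v.
  have Nv : nbhd e v != finset.set0 by apply/negP => /eqP h; have := Nne v; rewrite h eqxx.
  have cTS : cT_ v <= cS_ v.
    apply: ler_sum => w _; apply: ler_wpM2l; first by rewrite invr_ge0.
    by apply: (Smin_spec (upd T v w)).2; apply: compat_upd cS.
  have frv : 0 <= ratr (restr_fit f (T v)) :> R by rewrite ler0q.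
  have fsv : 0 <= ratr (f (S v)) :> R by rewrite ler0q.
  have E : restr_fit f (T v) = f (val (T v)) by [].
  case: (eqVneq (val (T v)) α) => Tv.
    have Sv : S v = α by move/compatP: cS; apply.
    rewrite E Tv -Sv lerD2r; apply: ler_wpM2l => //.
  have cTu : cT_ v <= u.
    apply: (@le_trans _ _ (\sum_(w in nbhd e v) (#|nbhd e v|%:R)^-1 * u)).
      apply: ler_sum => w _; apply: ler_wpM2l; first by rewrite invr_ge0.
      by apply: (Smin_spec (upd T v w)).2; apply: compat_updT Tv cS.
    by rewrite -mulr_suml sumN_eq1 // mul1r.
  case: (eqVneq (S v) α) => Sv.
    have cSu : u <= cS_ v.
      apply: (@le_trans _ _ (\sum_(w in nbhd e v) (#|nbhd e v|%:R)^-1 * u)).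
        by rewrite -mulr_suml sumN_eq1 // mul1r.
      apply: ler_sum => w _; apply: ler_wpM2l; first by rewrite invr_ge0.
      by apply: minS; apply: compat_updS Sv cS.
    apply: (@le_trans _ _ 0).
      by rewrite subr_le0; apply: ler_wpM2l.
    by rewrite subr_ge0; apply: ler_wpM2l.
  have Tb : val (T v) = β.
    by case/orP: (valP (T v)) => /eqP // h; rewrite h eqxx in Tv.
  have ff : ratr (f (S v)) <= ratr (restr_fit f (T v)) :> R.
    by rewrite ler_rat E Tb; apply: fmax.
  rewrite -!mulrBr.
  apply: (@le_trans _ _ (ratr (f (S v)) * (cT_ v - u))).
    by rewrite mulrC [X in _ <= X]mulrC; apply: ler_wnM2l; rewrite // subr_le0.
  by apply: ler_wpM2l => //; rewrite lerD2r.
have : \sum_v (ratr (restr_fit f (T v)) * cT_ v - ratr (restr_fit f (T v)) * u)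
   <= \sum_v (ratr (f (S v)) * cS_ v - ratr (f (S v)) * u).
  by apply: ler_sum => v _; apply: key.
rewrite !sumrB -!mulr_suml.
have -> : \sum_i ratr (restr_fit f (T i)) = F' by [].
have -> : \sum_i ratr (f (S i)) = F :> R by [].
move: hS'; rewrite [u * F]mulrC [u * F']mulrC; lra.
Qed.

Lemma Phi_ge0 (T : {ffun V -> T'}) : 0 <= Phi T.
Proof. exact: U_ge0. Qed.

Lemma Phi_mono (T : {ffun V -> T'}) : mono T (pair_a α β) -> 1 <= Phi T.
Proof.
move=> /forallP m; have [/compatP cS _] := Smin_spec T.
rewrite /Phi /U U_mono //; apply/forallP => u; apply/eqP; apply: cS.
by rewrite (eqP (m u)).
Qed.

Lemma hitT_le t (T : {ffun V -> T'}) :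
  hit R e (restr_fit f) (pair_a α β) t T <= Phi T.
Proof.
elim: t T => [|t IH] T /=; case: ifP => m; rewrite ?Phi_mono ?Phi_ge0 //.
apply: le_trans (Phi_super T).
by apply: (@step_mono R V T' e (restr_fit f) fr0 T _ Phi) => S'; apply: IH.
Qed.

Lemma main_le (M0 : {ffun V -> τ}) :
  fixprob R e (restr_fit f) (pair_a α β) (gproj α β M0) <= fixprob R e f α M0.
Proof.
apply: (@le_trans _ _ (Phi (gproj α β M0))).
  apply: ge_sup; first by exists (hit R e (restr_fit f) (pair_a α β) 0 (gproj α β M0)), 0%N.
  by move=> _ [t _ <-]; apply: hitT_le.
apply: (Smin_spec _).2; apply/compatP => v; rewrite ffunE.
case: eqP => //= _ h; move: nab; by rewrite h eqxx.
Qed.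

End Main.

Theorem corollary7 (R : realType) (V : finType) (e : rel V)
  (τ : finType) (f : τ -> rat) (α β : τ) :
  connected_graph e ->
  (forall j : τ, 1 <= f j) ->
  β != α ->
  (forall j : τ, j != α -> f j <= f β) ->
  forall M0 : {ffun V -> τ},
    fixprob R e (restr_fit f) (pair_a α β) (gproj α β M0)
    <= fixprob R e f α M0.
Proof.
move=> conn f1 nab fmax M0.
exact: main_le.
Qed.
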